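(* Let $\mathbb{C}$ be a small category and $N\mathbb{C}$ its nerve. Then $N\mathbb{C}$ is a Skvortsov–Shehtman complex if and only if it is a Kan complex.
   Context: A simplicial set $S$ is a Skvortsov–Shehtman complex if for all $n>1$, $0\le p<q\le n$, and any $(n-1)$-simplices $c_p,c_q$ of $S$ with $d_pc_q=d_{q-1}c_p$, there exists an $n$-simplex $x$ with $d_px=c_p$ and $d_qx=c_q$. *)

(* Defs.v *)
From mathcomp Require Import all_boot.
Set Implicit Arguments. Unset Strict Implicit. Unset Printing Implicit Defensive.

Record Category := {
  Ob : Type;
  Hom : Ob -> Ob -> Type;
  idm : forall a, Hom a a;
  comp : forall a b c, Hom b c -> Hom a b -> Hom a c;
  comp_id_l : forall a b (f : Hom a b), comp (idm b) f = f;
  comp_id_r : forall a b (f : Hom a b), comp f (idm a) = f;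
  comp_assoc : forall a b c d (h : Hom c d) (g : Hom b c) (f : Hom a b),
      comp h (comp g f) = comp (comp h g) f }.
Arguments idm {_} _.
Arguments comp {_ _ _ _} _ _.

(** * Face structure of a simplicial set: [simp n] are the n-simplices and
    [face n i : simp n.+1 -> simp n] is d_i, for 0 <= i <= n+1.
    Both the Kan and the Skvortsov--Shehtman conditions only involve faces. *)
Record FaceStruct := {
  simp : nat -> Type;
  face : forall n, 'I_n.+2 -> simp n.+1 -> simp n }.
Arguments face {_ _} _ _.

(** Skvortsov--Shehtman complex: for n = m+2 > 1, 0 <= p < q <= n,
    c_p, c_q (n-1)-simplices with d_p c_q = d_{q-1} c_p, there is an
    n-simplex x with d_p x = c_p and d_q x = c_q. *)
Definition SS_complex (X : FaceStruct) : Prop :=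
  forall (m : nat) (p q : 'I_m.+3) (cp cq : simp X m.+1),
    p < q ->
    face (inord p : 'I_m.+2) cq = face (inord q.-1 : 'I_m.+2) cp ->
    exists x : simp X m.+2, face p x = cp /\ face q x = cq.

(** Kan complex: every horn Lambda^n_k -> X (n >= 1, 0 <= k <= n) extends to
    an n-simplex.  A horn is a family (y_i)_{i <> k} of (n-1)-simplices with
    d_i y_j = d_{j-1} y_i for i < j, i,j <> k.  The case n = 1 (horns are single
    vertices, no compatibility) is stated separately. *)
Definition Kan_complex (X : FaceStruct) : Prop :=
  (forall (k : 'I_2) (y : 'I_2 -> simp X 0),
      exists x : simp X 1, forall i : 'I_2, i != k -> face i x = y i) /\
  (forall (m : nat) (k : 'I_m.+3) (y : 'I_m.+3 -> simp X m.+1),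
      (forall i j : 'I_m.+3, i != k -> j != k -> i < j ->
          face (inord i : 'I_m.+2) (y j) = face (inord j.-1 : 'I_m.+2) (y i)) ->
      exists x : simp X m.+2, forall i : 'I_m.+3, i != k -> face i x = y i).

(** * The nerve: n-simplices are functors [n] -> C, [n] = {0 < 1 < ... < n}. *)
Record nerve_simplex (C : Category) (n : nat) := NSimplex {
  nob : 'I_n.+1 -> Ob C;
  nmor : forall i j : 'I_n.+1, i <= j -> Hom (nob i) (nob j);
  nmor_id : forall (i : 'I_n.+1) (h : i <= i), nmor h = idm (nob i);
  nmor_comp : forall (i j k : 'I_n.+1) (hij : i <= j) (hjk : j <= k) (hik : i <= k),
      nmor hik = comp (nmor hjk) (nmor hij) }.
Arguments nmor {_ _} _ {_ _} _.

Lemma lift_mono n (k : 'I_n.+2) (i j : 'I_n.+1) :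
  i <= j -> lift k i <= lift k j.
Proof. by rewrite /= leq_bump2. Qed.

(** d_k : precomposition with the coface map delta_k = lift k : [n] -> [n+1]. *)
Definition nerve_face (C : Category) n (k : 'I_n.+2) (x : nerve_simplex C n.+1)
  : nerve_simplex C n.
Proof.
refine (@NSimplex C n (fun i => nob x (lift k i))
          (fun i j h => nmor x (lift_mono k h)) _ _).
- by move=> i h; apply: nmor_id.
- by move=> i j l hij hjl hil; apply: nmor_comp.
Defined.

Definition Nerve (C : Category) : FaceStruct :=
  {| simp := nerve_simplex C; face := @nerve_face C |}.

(* Main.v *)
From mathcomp Require Import all_boot zify.
Require Import Defs.
From Stdlib Require Import ProofIrrelevance FunctionalExtensionality ClassicalEpsilon.
Set Implicit Arguments. Unset Strict Implicit. Unset Printing Implicit Defensive.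

Definition io (C : Category) (a b : Ob C) (e : a = b) : Hom a b :=
  match e in _ = b' return Hom a b' with erefl => idm a end.

Lemma io_refl C (a : Ob C) (e : a = a) : io e = idm a.
Proof. by rewrite (proof_irrelevance _ e erefl). Qed.

Lemma io_irr C (a b : Ob C) (e e' : a = b) : io e = io e'.
Proof. by rewrite (proof_irrelevance _ e e'). Qed.

Lemma io_trans C (a b c : Ob C) (e1 : a = b) (e2 : b = c) (e3 : a = c) :
  comp (io e2) (io e1) = io e3.
Proof. destruct e1, e2; by rewrite !io_refl comp_id_l. Qed.

Definition hsim C (a b a' b' : Ob C) (f : Hom a b) (f' : Hom a' b') : Prop :=
  exists (ea : a = a') (eb : b = b'), comp (io eb) f = comp f' (io ea).

Lemma hsim_any C (a b a' b' : Ob C) (f : Hom a b) (f' : Hom a' b') :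
  hsim f f' -> forall ea eb, comp (io eb) f = comp f' (io ea).
Proof.
case=> ea [eb H] ea' eb'.
by rewrite (proof_irrelevance _ ea' ea) (proof_irrelevance _ eb' eb).
Qed.

Lemma hsim_refl C (a b : Ob C) (f : Hom a b) : hsim f f.
Proof. exists erefl, erefl => /=. by rewrite comp_id_l comp_id_r. Qed.

Lemma hsim_sym C (a b a' b' : Ob C) (f : Hom a b) (f' : Hom a' b') :
  hsim f f' -> hsim f' f.
Proof. case=> ea [eb H]; destruct ea, eb; exists erefl, erefl.
by move: H; rewrite /= !comp_id_l !comp_id_r. Qed.

Lemma hsim_trans C (a b a' b' a'' b'' : Ob C) (f : Hom a b) (f' : Hom a' b')
  (f'' : Hom a'' b'') : hsim f f' -> hsim f' f'' -> hsim f f''.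
Proof. case=> ea [eb H]; destruct ea, eb; case=> ea [eb H']; destruct ea, eb.
exists erefl, erefl; move: H H'; rewrite /= !comp_id_l !comp_id_r => -> //. Qed.

Lemma hsim_eq C (a b : Ob C) (f f' : Hom a b) : hsim f f' -> f = f'.
Proof. move=> H; have := hsim_any H erefl erefl; by rewrite /= comp_id_l comp_id_r. Qed.

Lemma hsim_comp C (a b c a' b' c' : Ob C) (f : Hom a b) (g : Hom b c)
  (f' : Hom a' b') (g' : Hom b' c') :
  hsim f f' -> hsim g g' -> hsim (comp g f) (comp g' f').
Proof. case=> ea [eb H]; destruct ea, eb; case=> ea [eb H']; destruct eb.
rewrite (proof_irrelevance _ ea erefl) in H'.
exists erefl, erefl; move: H H'; rewrite /= !comp_id_l !comp_id_r => -> -> //.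
Qed.

Definition tr C (a b a' b' : Ob C) (ea : a = a') (eb : b = b') (f : Hom a b) : Hom a' b' :=
  match ea in _ = x, eb in _ = y return Hom x y with erefl, erefl => f end.

Lemma hsim_tr C (a b a' b' : Ob C) (ea : a = a') (eb : b = b') (f : Hom a b) :
  hsim f (tr ea eb f).
Proof. destruct ea, eb; exact: hsim_refl. Qed.

Lemma hsim_io C (a b a' : Ob C) (e : a' = a) (f : Hom a b) : hsim (comp f (io e)) f.
Proof. destruct e; exists erefl, erefl; by rewrite /= !comp_id_l !comp_id_r. Qed.

Lemma nmor_irr C n (z : nerve_simplex C n) (i j : 'I_n.+1) (h h' : i <= j) :
  nmor z h = nmor z h'.
Proof. by rewrite (bool_irrelevance h h'). Qed.

Lemma nmor_reidx C n (z : nerve_simplex C n) (i j i' j' : 'I_n.+1) (h : i <= j) (h' : i' <= j') :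
  i = i' -> j = j' -> hsim (nmor z h) (nmor z h').
Proof. move=> Ei Ej; subst; rewrite (nmor_irr z h h'); exact: hsim_refl. Qed.

Lemma ns_ext C n (x y : nerve_simplex C n) (e : forall i, nob x i = nob y i) :
  (forall (i j : 'I_n.+1) (h : i <= j), comp (io (e j)) (nmor x h) = comp (nmor y h) (io (e i))) -> x = y.
Proof.
destruct x as [o1 m1 i1 c1], y as [o2 m2 i2 c2]; simpl in *.
have Eo : o1 = o2 := functional_extensionality _ _ e.
subst o2 => H.
have Em : m1 = m2.
  apply: functional_extensionality_dep => i; apply: functional_extensionality_dep => j.
  apply: functional_extensionality_dep => h.
  by have := H i j h; rewrite !io_refl comp_id_l comp_id_r.
subst m2.
by rewrite (proof_irrelevance _ i1 i2) (proof_irrelevance _ c1 c2).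
Qed.

Lemma face_hsim C n (a : 'I_n.+2) (w : nerve_simplex C n.+1) (z : nerve_simplex C n) :
  nerve_face a w = z -> forall (i j : 'I_n.+1) (h : i <= j), hsim (nmor w (lift_mono a h)) (nmor z h).
Proof. move=> H; destruct H => i j h; exact: hsim_refl. Qed.

Lemma ns0_ext C (x y : nerve_simplex C 0) : nob x ord0 = nob y ord0 -> x = y.
Proof.
move=> E.
have e : forall i, nob x i = nob y i by move=> i; rewrite (ord1 i).
apply: (@ns_ext C 0 x y e) => i j h.
have ji : j = i by apply/val_inj; rewrite (ord1 i) (ord1 j).
subst j; rewrite !nmor_id; by rewrite comp_id_l comp_id_r.
Qed.


Record grpd (C : Category) := Grpd {
  ginv : forall a b : Ob C, Hom a b -> Hom b a;
  ginvL : forall a b (f : Hom a b), comp (ginv f) f = idm a;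
  ginvR : forall a b (f : Hom a b), comp f (ginv f) = idm b }.
Arguments ginv {C} g {a b} f : rename.

Lemma cancelR C (G : grpd C) (a b c : Ob C) (f : Hom a b) (h : Hom b c) :
  comp (comp h f) (ginv G f) = h.
Proof. by rewrite -comp_assoc ginvR comp_id_r. Qed.
Lemma cancelR' C (G : grpd C) (a b c : Ob C) (f : Hom b a) (h : Hom b c) :
  comp (comp h (ginv G f)) f = h.
Proof. by rewrite -comp_assoc ginvL comp_id_r. Qed.
Lemma cancelL C (G : grpd C) (a b c : Ob C) (f : Hom b c) (h : Hom a b) :
  comp (ginv G f) (comp f h) = h.
Proof. by rewrite comp_assoc ginvL comp_id_l. Qed.
Lemma cancelL' C (G : grpd C) (a b c : Ob C) (f : Hom c b) (h : Hom a b) :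
  comp f (comp (ginv G f) h) = h.
Proof. by rewrite comp_assoc ginvR comp_id_l. Qed.

Lemma inv_uniq C (G : grpd C) (a b : Ob C) (f : Hom a b) (g : Hom b a) :
  comp g f = idm a -> g = ginv G f.
Proof. move=> H. by rewrite -(cancelR G f g) H comp_id_l. Qed.

Lemma ginv_comp C (G : grpd C) (a b c : Ob C) (f : Hom a b) (g : Hom b c) :
  ginv G (comp g f) = comp (ginv G f) (ginv G g).
Proof. symmetry; apply: inv_uniq. by rewrite comp_assoc cancelR' ginvL. Qed.

Lemma rcancel C (G : grpd C) (a b c : Ob C) (g : Hom a b) (f1 f2 : Hom b c) :
  comp f1 g = comp f2 g -> f1 = f2.
Proof. move=> H. by rewrite -(cancelR G g f1) H cancelR. Qed.

Definition z0le n (j : 'I_n.+1) : (ord0 : 'I_n.+1) <= j := leq0n j.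

Definition arr C (G : grpd C) n (z : nerve_simplex C n) (i j : 'I_n.+1) : Hom (nob z i) (nob z j) :=
  match leqP i j with
  | LeqNotGtn h => nmor z h
  | GtnNotLeq h => ginv G (nmor z (ltnW h))
  end.

Lemma arr_le C (G : grpd C) n (z : nerve_simplex C n) (i j : 'I_n.+1) (h : i <= j) :
  arr G z i j = nmor z h.
Proof.
rewrite /arr; destruct (leqP i j) as [h'|h']; first exact: nmor_irr.
by exfalso; move: h'; rewrite ltnNge h.
Qed.

Lemma arr_base C (G : grpd C) n (z : nerve_simplex C n) (i j : 'I_n.+1) :
  arr G z i j = comp (nmor z (z0le j)) (ginv G (nmor z (z0le i))).
Proof.
rewrite /arr; destruct (leqP i j) as [h|h].
  by rewrite (nmor_comp z (z0le i) h (z0le j)) cancelR.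
rewrite (nmor_comp z (z0le j) (ltnW h) (z0le i)) ginv_comp.
by rewrite comp_assoc ginvR comp_id_l.
Qed.

Lemma arr_comp C (G : grpd C) n (z : nerve_simplex C n) (i j k : 'I_n.+1) :
  comp (arr G z j k) (arr G z i j) = arr G z i k.
Proof. by rewrite !arr_base comp_assoc cancelR'. Qed.

Lemma arr_id C (G : grpd C) n (z : nerve_simplex C n) (i : 'I_n.+1) :
  arr G z i i = idm _.
Proof. by rewrite arr_base ginvR. Qed.

Lemma arr_face C (G : grpd C) n (a : 'I_n.+2) (w : nerve_simplex C n.+1) (u v : 'I_n.+1) :
  arr G (nerve_face a w) u v = arr G w (lift a u) (lift a v).
Proof. by rewrite !arr_base /= (nmor_comp w (z0le _) (lift_mono a (z0le v)) (z0le _))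
  (nmor_comp w (z0le _) (lift_mono a (z0le u)) (z0le _)) ginv_comp comp_assoc cancelR. Qed.

Lemma arr_reidx C (G : grpd C) n (z : nerve_simplex C n) (i j i' j' : 'I_n.+1) :
  i = i' -> j = j' -> hsim (arr G z i j) (arr G z i' j').
Proof. move=> -> ->; exact: hsim_refl. Qed.

Lemma arr_eq C (G : grpd C) n (x y : nerve_simplex C n) (i j : 'I_n.+1) :
  x = y -> hsim (arr G x i j) (arr G y i j).
Proof. move=> ->; exact: hsim_refl. Qed.

Definition mkS C (G : grpd C) n (o : 'I_n.+1 -> Ob C) (B : Ob C) (g : forall i, Hom B (o i))
  : nerve_simplex C n.
Proof.
refine (@NSimplex C n o (fun i j _ => comp (g j) (ginv G (g i))) _ _).
- by move=> i _; rewrite ginvR.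
- by move=> i j k _ _ _; rewrite comp_assoc cancelR'.
Defined.

Lemma face_mkS C (G : grpd C) n (s : 'I_n.+2) (o : 'I_n.+2 -> Ob C) (B : Ob C)
  (g : forall i, Hom B (o i)) (z : nerve_simplex C n) (b : 'I_n.+1) (K : Hom B (nob z b))
  (e : forall i : 'I_n.+1, o (lift s i) = nob z i) :
  (forall i, comp (io (e i)) (g (lift s i)) = comp (arr G z b i) K) ->
  nerve_face s (@mkS C G n.+1 o B g) = z.
Proof.
move=> H; apply: (@ns_ext C n (nerve_face s (@mkS C G n.+1 o B g)) z e) => i j h /=.
apply: (rcancel G (g:=g (lift s i))).
rewrite -comp_assoc cancelR' H -comp_assoc H comp_assoc -(arr_le G z h).
by rewrite arr_comp.
Qed.


Lemma bumpE i k : bump i k = if i <= k then k.+1 else k.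
Proof. by rewrite /bump; case: leqP => _; rewrite ?add1n ?add0n. Qed.
Lemma unbumpE i k : unbump i k = if i < k then k.-1 else k.
Proof. by rewrite /unbump; case: ltnP => _; rewrite ?subn1 ?subn0. Qed.

Definition idx m (s v : 'I_m.+3) : 'I_m.+2 := inord (unbump s v).

Ltac crunch := rewrite ?bumpE ?unbumpE; repeat case: ifP; repeat (move=> /negbFE || move=> /negbT); lia.

Lemma idx_val m (s v : 'I_m.+3) : v != s -> (idx s v : nat) = unbump s v.
Proof.
move=> H; rewrite /idx inordK //.
have := ltn_ord v; have := ltn_ord s; move: H; rewrite -val_eqE /=.
move: (val v) (val s) => a b; crunch.
Qed.

Lemma lift_idx m (s v : 'I_m.+3) : v != s -> lift s (idx s v) = v.
Proof.
move=> H; apply/val_inj; rewrite /= idx_val //.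
move: H; rewrite -val_eqE /=; move: (val v) (val s) => a b; crunch.
Qed.

Lemma idx_lift m (s : 'I_m.+3) (i : 'I_m.+2) : idx s (lift s i) = i.
Proof.
apply/val_inj; rewrite /= idx_val; last by rewrite eq_sym neq_lift.
by rewrite bumpK.
Qed.

Lemma tidx m (s t v : 'I_m.+3) : s < t -> v != s -> v != t ->
  exists u : 'I_m.+1, lift (inord s : 'I_m.+2) u = idx t v /\ lift (inord t.-1 : 'I_m.+2) u = idx s v.
Proof.
move=> st vs vt.
have hv := ltn_ord v; have ht := ltn_ord t.
exists (inord (unbump s (unbump t v))); split; apply/val_inj;
  rewrite /= ?idx_val // !inordK;
  move: vs vt st hv ht; rewrite -!val_eqE /=; move: (val v) (val s) (val t) => a b c; crunch.
Qed.


Lemma hsim_src C (a b a' b' : Ob C) (f : Hom a b) (f' : Hom a' b') : hsim f f' -> a = a'.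
Proof. by case=> ea _. Qed.
Lemma hsim_tgt C (a b a' b' : Ob C) (f : Hom a b) (f' : Hom a' b') : hsim f f' -> b = b'.
Proof. by case=> _ [eb _]. Qed.

Lemma arrT C (G : grpd C) m (S : pred 'I_m.+3) (y : 'I_m.+3 -> nerve_simplex C m.+1)
  (compat : forall i j : 'I_m.+3, S i -> S j -> i < j ->
     nerve_face (inord i : 'I_m.+2) (y j) = nerve_face (inord j.-1 : 'I_m.+2) (y i))
  (s t v w : 'I_m.+3) : S s -> S t -> s != t -> v != s -> v != t -> w != s -> w != t ->
  hsim (arr G (y s) (idx s v) (idx s w)) (arr G (y t) (idx t v) (idx t w)).
Proof.
wlog st : s t / s < t.
  move=> Hw Ss St ne vs vt ws wt.
  case: (ltngtP s t) => [lt|gt|eq]; first exact: Hw.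
  - by apply: hsim_sym; apply: Hw; rewrite // eq_sym.
  - by move: ne; rewrite (val_inj eq) eqxx.
move=> Ss St ne vs vt ws wt.
have H := compat s t Ss St st.
have [uv [Hv1 Hv2]] := tidx st vs vt.
have [uw [Hw1 Hw2]] := tidx st ws wt.
apply: hsim_trans (arr_reidx G (y s) (esym Hv2) (esym Hw2)) _.
rewrite -arr_face.
apply: hsim_trans (arr_eq G uv uw (esym H)) _.
rewrite arr_face.
exact: (arr_reidx G (y t) Hv1 Hw1).
Qed.

Lemma key C (G : grpd C) m (S : pred 'I_m.+3) (y : 'I_m.+3 -> nerve_simplex C m.+1)
  (compat : forall i j : 'I_m.+3, S i -> S j -> i < j ->
     nerve_face (inord i : 'I_m.+2) (y j) = nerve_face (inord j.-1 : 'I_m.+2) (y i))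
  (p q c : 'I_m.+3) : S p -> S q -> p != q -> ~~ S c ->
  exists x : nerve_simplex C m.+2, forall s, S s -> nerve_face s x = y s.
Proof.
move=> Sp Sq pq Sc.
pose src v := if v == p then q else p.
have src_S v : S (src v) by rewrite /src; case: (v == p).
have src_ne v : v != src v.
  by rewrite /src; case: (eqVneq v p) => [->|ne].
have cS s : S s -> c != s by move=> Ss; apply/eqP => E; move: Sc; rewrite E Ss.
pose o v := nob (y (src v)) (idx (src v) v).
have oE s v : S s -> v != s -> o v = nob (y s) (idx s v).
  move=> Ss vs; rewrite /o; case: (eqVneq s (src v)) => [<-|ne] //.
  have ne' : src v != s by rewrite eq_sym.
  exact: hsim_src (arrT G compat (src_S v) Ss ne' (src_ne v) vs (src_ne v) vs).
pose h s v := arr G (y s) (idx s c) (idx s v).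
have gex v : exists gv : Hom (o c) (o v), forall s, S s -> v != s -> hsim gv (h s v).
  exists (comp (h (src v) v) (io (oE (src v) c (src_S v) (cS _ (src_S v))))).
  move=> s Ss vs.
  apply: hsim_trans (hsim_io _ _) _.
  case: (eqVneq s (src v)) => [->|ne]; first exact: hsim_refl.
  have ne' : src v != s by rewrite eq_sym.
  exact: (arrT G compat (src_S v) Ss ne' (cS _ (src_S v)) (cS _ Ss) (src_ne v) vs).
pose g v := proj1_sig (constructive_indefinite_description _ (gex v)).
have gP v : forall s, S s -> v != s -> hsim (g v) (h s v).
  exact: (proj2_sig (constructive_indefinite_description _ (gex v))).
exists (@mkS C G m.+2 o (o c) g) => s Ss.
have ls (i : 'I_m.+2) : lift s i != s by rewrite eq_sym neq_lift.
pose e (i : 'I_m.+2) := etrans (oE s (lift s i) Ss (ls i)) (f_equal (nob (y s)) (idx_lift s i)).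
apply: (face_mkS (b := idx s c) (K := io (oE s c Ss (cS _ Ss))) (e := e)) => i.
apply: hsim_any.
apply: hsim_trans (gP _ s Ss (ls i)) _.
exact: (arr_reidx G (y s) erefl (idx_lift s i)).
Qed.


Definition ob1 C (a b : Ob C) (k : nat) : Ob C := match k with 0 => a | _ => b end.

Definition mor1 C (a b : Ob C) (f : Hom a b) (i j : nat) : i <= j -> Hom (ob1 a b i) (ob1 a b j) :=
  match i, j with
  | 0, 0 => fun _ => idm a
  | 0, S _ => fun _ => f
  | S _, S _ => fun _ => idm b
  | S _, 0 => fun h => False_rect _ (Bool.diff_false_true h)
  end.

Definition edge C (a b : Ob C) (f : Hom a b) : nerve_simplex C 1.
Proof.
refine (@NSimplex C 1 (fun i => ob1 a b (val i)) (fun i j h => mor1 f h) _ _).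
- by move=> [[|[|k]] Hk] h.
- move=> [[|[|i]] Hi] [[|[|j]] Hj] [[|[|k]] Hk] //= hij hjk hik;
  by rewrite ?comp_id_l ?comp_id_r.
Defined.

Lemma third m (p q : 'I_m.+3) : exists c : 'I_m.+3, (c != p) && (c != q).
Proof.
exists (inord (if (0 != p) && (0 != q) then 0 else if (1 != p) && (1 != q) then 1 else 2)).
rewrite -!val_eqE /= inordK; move: (ltn_ord p) (ltn_ord q); move: (val p) (val q) => a b;
  repeat case: ifP; repeat (move=> /negbFE || move=> /negbT); lia.
Qed.

Definition i0 : 'I_3 := ord0.
Definition i1 : 'I_3 := inord 1.
Definition i2 : 'I_3 := ord_max.
Definition j0 : 'I_2 := ord0.
Definition j1 : 'I_2 := ord_max.
Lemma h01 : i0 <= i1. Proof. by rewrite /= inordK. Qed.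
Lemma h12 : i1 <= i2. Proof. by rewrite /= inordK. Qed.
Lemma h02 : i0 <= i2. Proof. by []. Qed.
Lemma hj : j0 <= j1. Proof. by []. Qed.

Lemma ex_grpd C :
  (forall (cp cq : nerve_simplex C 1),
     nerve_face j0 cq = nerve_face j0 cp ->
     exists x : nerve_simplex C 2, nerve_face i0 x = cp /\ nerve_face i1 x = cq) ->
  (forall (cp cq : nerve_simplex C 1),
     nerve_face j1 cq = nerve_face j1 cp ->
     exists x : nerve_simplex C 2, nerve_face i1 x = cp /\ nerve_face i2 x = cq) ->
  inhabited (grpd C).
Proof.
move=> H01 H12.
have L (a b : Ob C) (f : Hom a b) : exists g : Hom b a, comp g f = idm a.
  have [|x [E1 E2]] := H12 (edge (idm a)) (edge f).
    by apply: ns0_ext.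
  have A : hsim (nmor x h02) (idm a).
    apply: hsim_trans (face_hsim E1 hj).
    by apply: nmor_reidx; apply/val_inj; rewrite /i0 /i1 /i2 /j0 /j1 /= ?inordK.
  have B : hsim (nmor x h01) f.
    apply: hsim_trans (face_hsim E2 hj).
    by apply: nmor_reidx; apply/val_inj; rewrite /i0 /i1 /i2 /j0 /j1 /= ?inordK.
  have eB := hsim_tgt B; have eA := hsim_tgt A.
  exists (tr eB eA (nmor x h12)).
  apply: hsim_eq; refine (hsim_trans _ A); apply: hsim_sym.
  rewrite (nmor_comp x h01 h12 h02).
  exact: hsim_comp B (hsim_tr _ _ _).
have R (a b : Ob C) (f : Hom a b) : exists g : Hom b a, comp f g = idm b.
  have [|x [E1 E2]] := H01 (edge f) (edge (idm b)).
    by apply: ns0_ext.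
  have A : hsim (nmor x h02) (idm b).
    apply: hsim_trans (face_hsim E2 hj).
    by apply: nmor_reidx; apply/val_inj; rewrite /i0 /i1 /i2 /j0 /j1 /= ?inordK.
  have B : hsim (nmor x h12) f.
    apply: hsim_trans (face_hsim E1 hj).
    by apply: nmor_reidx; apply/val_inj; rewrite /i0 /i1 /i2 /j0 /j1 /= ?inordK.
  have eA := hsim_src A; have eB := hsim_src B.
  exists (tr eA eB (nmor x h01)).
  apply: hsim_eq; refine (hsim_trans _ A); apply: hsim_sym.
  rewrite (nmor_comp x h01 h12 h02).
  exact: hsim_comp (hsim_tr _ _ _) B.
pose gi (a b : Ob C) (f : Hom a b) := proj1_sig (constructive_indefinite_description _ (L a b f)).
have giL (a b : Ob C) (f : Hom a b) : comp (gi a b f) f = idm a.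
  exact: proj2_sig (constructive_indefinite_description _ (L a b f)).
constructor; apply: (@Grpd C gi giL) => a b f.
have [g' Hg'] := R a b f.
have -> : gi a b f = g'.
  by rewrite -[gi a b f]comp_id_r -Hg' comp_assoc giL comp_id_l.
exact: Hg'.
Qed.


Lemma SS_grpd C : SS_complex (Nerve C) -> inhabited (grpd C).
Proof.
move=> SS; apply: ex_grpd => cp cq E.
- have e0 : (inord (val i0) : 'I_2) = j0 by apply/val_inj; rewrite /= inordK.
  have e1 : (inord (i1.-1) : 'I_2) = j0 by apply/val_inj; rewrite /= !inordK.
  apply: (SS 0 i0 i1 cp cq); first by rewrite /= inordK.
  by rewrite /= e0 e1.
- have e0 : (inord (val i1) : 'I_2) = j1 by apply/val_inj; rewrite /= !inordK.
  have e1 : (inord (i2.-1) : 'I_2) = j1 by apply/val_inj; rewrite /= !inordK.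
  apply: (SS 0 i1 i2 cp cq); first by rewrite /= inordK.
  by rewrite /= e0 e1.
Qed.

Lemma i1i0 : (i1 == i0) = false. Proof. by rewrite /i1 -val_eqE /= inordK. Qed.
Lemma i2i1 : (i2 == i1) = false. Proof. by rewrite /i1 -val_eqE /= inordK. Qed.
Lemma i1i2 : (i1 != i2). Proof. by rewrite eq_sym i2i1. Qed.
Lemma i1i0' : (i1 != i0). Proof. by rewrite i1i0. Qed.

Lemma Kan_grpd C : Kan_complex (Nerve C) -> inhabited (grpd C).
Proof.
move=> [_ K]; apply: ex_grpd => cp cq E.
- have [|x Hx] := K 0 i2 (fun i => if i == i0 then cp else cq).
    move=> [[|[|[|//]]] Hi] [[|[|[|//]]] Hj] //= _ _ _.
    have -> : (inord 0 : 'I_2) = j0 by apply/val_inj; rewrite /= inordK.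
    exact: E.
  exists x; split.
    exact: (Hx i0 isT).
  have H1 := Hx i1 i1i2; rewrite i1i0 in H1; exact: H1.
- have [|x Hx] := K 0 i0 (fun i => if i == i1 then cp else cq).
    move=> [[|[|[|//]]] Hi] [[|[|[|//]]] Hj] //= _ _ _.
    have -> : (Ordinal Hj == i1) = false by rewrite /i1 -val_eqE /= inordK.
    have -> : (Ordinal Hi == i1) by rewrite /i1 -val_eqE /= inordK.
    have -> : (inord 1 : 'I_2) = j1 by apply/val_inj; rewrite /= inordK.
    exact: E.
  exists x; split.
    have H1 := Hx i1 i1i0'; rewrite eqxx in H1; exact: H1.
  have H1 := Hx i2 isT; rewrite i2i1 in H1; exact: H1.
Qed.

Lemma grpd_Kan C : grpd C -> Kan_complex (Nerve C).
Proof.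
move=> G; split.
- move=> k y.
  pose j : 'I_2 := if k == ord0 then ord_max else ord0.
  have jk : j != k by rewrite /j; case: (eqVneq k ord0) => [->|] //; rewrite -!val_eqE /=;
     move: (ltn_ord k); case: (val k) => [|[|]].
  exists (@mkS C G 1 (fun _ => nob (y j) ord0) (nob (y j) ord0) (fun _ => idm _)) => i ik.
  have -> : i = j.
    apply/val_inj; move: ik jk; rewrite -!val_eqE /=; move: (ltn_ord i) (ltn_ord j) (ltn_ord k).
    move: (val i) (val j) (val k) => a b c; lia.
  pose e (i' : 'I_1) := f_equal (nob (y j)) (esym (ord1 i')).
  apply: (face_mkS (b := ord0) (K := io (e ord0)) (e := e)) => i'.
  have Hs : hsim (idm (nob (y j) ord0)) (arr G (y j) ord0 i').
    apply: hsim_trans (arr_reidx G (y j) erefl (esym (ord1 i'))).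
    rewrite arr_id; exact: hsim_refl.
  exact: (hsim_any Hs (e ord0) (e i')).
- move=> m k y Hy.
  have [p /andP [pk _]] := third k k.
  have [q /andP [qk qp]] := third k p.
  have pq : p != q by rewrite eq_sym.
  have kk : ~~ (k != k) by rewrite eqxx.
  have [x Hx] := @key C G m (fun i => i != k) y Hy p q k pk qk pq kk.
  by exists x.
Qed.

Lemma grpd_SS C : grpd C -> SS_complex (Nerve C).
Proof.
move=> G m p q cp cq pq E.
have [c /andP [cp' cq']] := third p q.
have npq : q != p by rewrite neq_ltn pq orbT.
pose S := fun i : 'I_m.+3 => (i == p) || (i == q).
pose y := fun i : 'I_m.+3 => if i == p then cp else cq.
have compat : forall i j : 'I_m.+3, S i -> S j -> i < j ->
     nerve_face (inord i : 'I_m.+2) (y j) = nerve_face (inord j.-1 : 'I_m.+2) (y i).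
  move=> i j /orP [] /eqP -> /orP [] /eqP -> //; rewrite ?ltnn //.
  - by rewrite /y eqxx (negbTE npq).
  - by move=> qp; move: (ltn_trans pq qp); rewrite ltnn.
have Sp : S p by rewrite /S eqxx.
have Sq : S q by rewrite /S eqxx orbT.
have Sc : ~~ S c by rewrite /S negb_or cp' cq'.
have pq' : p != q by rewrite eq_sym.
have [x Hx] := @key C G m S y compat p q c Sp Sq pq' Sc.
exists x; split.
  by have := Hx p Sp; rewrite /y eqxx.
by have := Hx q Sq; rewrite /y (negbTE npq).
Qed.

Theorem mainTheorem5 (C : Category) :
  SS_complex (Nerve C) <-> Kan_complex (Nerve C).
Proof.
split => H.
- have [G] := SS_grpd H; exact: grpd_Kan.
- have [G] := Kan_grpd H; exact: grpd_SS.
Qed.
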